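(* Let $\lambda\ge1$ and let $f(z)=z+\sum_{n\ge2}a_nz^n\in\mathcal B_\Sigma(\lambda,\varphi_0)$, where $\varphi_0(z)=\frac{1+z}{1-z}$. Then $|a_3|\le\dfrac{2}{2\lambda+1}$ and $|a_3-a_2^2|\le\dfrac{2}{2\lambda+1}$.
   Context: Let $\mathbb U=\{z\in\mathbb C:|z|<1\}$; $\Sigma$ is the class of $f(z)=z+\sum_{n\ge2}a_nz^n$ analytic and univalent in $\mathbb U$ whose inverse extends to an analytic univalent function $g=f^{-1}$ on $\mathbb U$. $F\prec G$ means $F=G\circ w$ for some analytic $w:\mathbb U\to\mathbb U$ with $w(0)=0$. $\mathcal B_\Sigma(\lambda,\varphi_0)$ is the set of $f\in\Sigma$ with $(1-\lambda)\frac{f(z)}{z}+\lambda f'(z)\prec\frac{1+z}{1-z}$ and $(1-\lambda)\frac{g(w)}{w}+\lambda g'(w)\prec\frac{1+w}{1-w}$, $g=f^{-1}$. *)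

(* Defs.v *)
From Stdlib Require Import Reals.
Open Scope R_scope.

Definition Cplx : Type := (R * R)%type.
Definition Cre (z : Cplx) : R := fst z.
Definition Cim (z : Cplx) : R := snd z.
Definition RtoC (x : R) : Cplx := (x, 0).
Definition C0 : Cplx := (0, 0).
Definition C1 : Cplx := (1, 0).
Definition Cadd (z w : Cplx) : Cplx := (fst z + fst w, snd z + snd w).
Definition Copp (z : Cplx) : Cplx := (- fst z, - snd z).
Definition Csub (z w : Cplx) : Cplx := Cadd z (Copp w).
Definition Cmul (z w : Cplx) : Cplx :=
  (fst z * fst w - snd z * snd w, fst z * snd w + snd z * fst w).
Definition Cinv (z : Cplx) : Cplx :=
  (fst z / (fst z ^ 2 + snd z ^ 2), - snd z / (fst z ^ 2 + snd z ^ 2)).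
Definition Cdiv (z w : Cplx) : Cplx := Cmul z (Cinv w).
Definition Cnorm (z : Cplx) : R := sqrt (fst z ^ 2 + snd z ^ 2).
Fixpoint Cpow (z : Cplx) (n : nat) : Cplx :=
  match n with O => C1 | S m => Cmul z (Cpow z m) end.

Fixpoint Cpsum (u : nat -> Cplx) (n : nat) : Cplx :=
  match n with O => u O | S m => Cadd (Cpsum u m) (u (S m)) end.

Definition Chas_sum (u : nat -> Cplx) (s : Cplx) : Prop :=
  forall eps : R, 0 < eps -> exists N : nat, forall n : nat, (N <= n)%nat ->
    Cnorm (Csub (Cpsum u n) s) < eps.

Definition inU (z : Cplx) : Prop := Cnorm z < 1.

Definition series_on_U (a : nat -> Cplx) (F : Cplx -> Cplx) : Prop :=
  forall z, inU z -> Chas_sum (fun n => Cmul (a n) (Cpow z n)) (F z).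

Definition analytic_on_U (F : Cplx -> Cplx) : Prop :=
  exists a : nat -> Cplx, series_on_U a F.

Definition univalent_on_U (F : Cplx -> Cplx) : Prop :=
  forall z1 z2, inU z1 -> inU z2 -> F z1 = F z2 -> z1 = z2.

Definition Cderiv (F : Cplx -> Cplx) (z L : Cplx) : Prop :=
  forall eps : R, 0 < eps -> exists delta : R, 0 < delta /\
    forall h : Cplx, 0 < Cnorm h -> Cnorm h < delta ->
      Cnorm (Csub (Cdiv (Csub (F (Cadd z h)) (F z)) h) L) < eps.

Definition schwarz (w : Cplx -> Cplx) : Prop :=
  analytic_on_U w /\ w C0 = C0 /\ (forall z, inU z -> inU (w z)).

Definition phi0 (z : Cplx) : Cplx := Cdiv (Cadd C1 z) (Csub C1 z).

(** Subordination F < G on U.  F may have a removable singularity at 0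
    (as z |-> f(z)/z does), so the identity is required on U \ {0};
    by continuity this is the same as on U. *)
Definition subordinate (F G : Cplx -> Cplx) : Prop :=
  exists w : Cplx -> Cplx, schwarz w /\
    forall z, inU z -> z <> C0 -> F z = G (w z).

(** f(z) = sum a_n z^n, with a_0 = 0, a_1 = 1, analytic and univalent on U,
    whose inverse extends to an analytic univalent g on U (g = f^{-1} near 0). *)
Definition in_Sigma (a : nat -> Cplx) (f g : Cplx -> Cplx) : Prop :=
  a O = C0 /\ a 1%nat = C1 /\ series_on_U a f /\ univalent_on_U f /\
  analytic_on_U g /\ univalent_on_U g /\
  (exists r : R, 0 < r /\ forall w, Cnorm w < r -> inU (g w) /\ f (g w) = w).

Definition bazil (lam : R) (F Fp : Cplx -> Cplx) (z : Cplx) : Cplx :=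
  Cadd (Cmul (RtoC (1 - lam)) (Cdiv (F z) z)) (Cmul (RtoC lam) (Fp z)).

Definition in_B_Sigma (lam : R) (a : nat -> Cplx) (f g : Cplx -> Cplx) : Prop :=
  in_Sigma a f g /\
  (exists fp : Cplx -> Cplx, (forall z, inU z -> Cderiv f z (fp z)) /\
     subordinate (bazil lam f fp) phi0) /\
  (exists gp : Cplx -> Cplx, (forall w, inU w -> Cderiv g w (gp w)) /\
     subordinate (bazil lam g gp) phi0).

(* Main.v *)
Require Import Defs.
From Stdlib Require Import Reals Lra Lia Psatz Arith.
From Coquelicot Require Import Coquelicot.
Open Scope R_scope.


Lemma chasE u s : Chas_sum u s <-> forall eps, 0 < eps -> exists N, forall n, (N <= n)%nat ->
  Cmod (Cpsum u n - s)%C < eps.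
Proof. reflexivity. Qed.

Lemma Cmod_tri3 a b c : Cmod (a - b)%C <= Cmod (a - c)%C + Cmod (c - b)%C.
Proof.
  replace (a - b)%C with ((a - c) + (c - b))%C by ring. apply Cmod_triangle.
Qed.

Lemma Cmod_sub_le a b : Cmod (a - b)%C <= Cmod a + Cmod b.
Proof.
  unfold Cminus. eapply Rle_trans. apply Cmod_triangle. rewrite Cmod_opp. lra.
Qed.

Lemma Cmod_RtoC t : 0 <= t -> Cmod (RtoC t) = t.
Proof. intros. rewrite Cmod_R. apply Rabs_pos_eq; auto. Qed.

Lemma sum_term_le (u : nat -> C) N n : (n <= N)%nat ->
  Cmod (u n) <= sum_f_R0 (fun k => Cmod (u k)) N.
Proof.
  induction N; intros H.
  - assert (n = 0%nat) by lia. subst. simpl. lra.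
  - simpl. destruct (Nat.eq_dec n (S N)).
    + subst. pose proof (cond_pos_sum (fun k => Cmod (u k)) N (fun k => Cmod_ge_0 _)). lra.
    + pose proof (Cmod_ge_0 (u (S N))). assert (n <= N)%nat by lia. specialize (IHN H1). lra.
Qed.

Lemma chas_bounded u s : Chas_sum u s -> exists M, forall n, Cmod (u n) <= M.
Proof.
  intros H. destruct (H 1 Rlt_0_1) as [N HN].
  exists (sum_f_R0 (fun k => Cmod (u k)) N + 2).
  intros n. destruct (le_lt_dec n N).
  - pose proof (sum_term_le u N n l). lra.
  - destruct n as [|m]. lia.
    pose proof (HN (S m) ltac:(lia)) as H1. pose proof (HN m ltac:(lia)) as H2.
    change (Cmod (Cpsum u (S m) - s)%C < 1) in H1.
    change (Cmod (Cpsum u m - s)%C < 1) in H2.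
    simpl in H1. change (Cadd (Cpsum u m) (u (S m))) with (Cpsum u m + u (S m))%C in H1.
    replace (u (S m)) with ((Cpsum u m + u (S m) - s) - (Cpsum u m - s))%C by ring.
    pose proof (Cmod_sub_le (Cpsum u m + u (S m) - s)%C (Cpsum u m - s)%C).
    pose proof (cond_pos_sum (fun k => Cmod (u k)) N (fun k => Cmod_ge_0 _)). lra.
Qed.

Lemma chas_tail u s K B q : Chas_sum u s -> 0 <= q < 1 ->
  (forall n, (K < n)%nat -> Cmod (u n) <= B * q ^ (n - S K)) ->
  Cmod (s - Cpsum u K)%C <= B / (1 - q).
Proof.
  intros Hs Hq Hb.
  assert (HB : 0 <= B).
  { specialize (Hb (S K) ltac:(lia)). replace (S K - S K)%nat with 0%nat in Hb by lia.
    simpl in Hb. pose proof (Cmod_ge_0 (u (S K))). lra. }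
  assert (Hp : forall m, Cmod (Cpsum u (K + m) - Cpsum u K)%C <= B * (1 - q ^ m) / (1 - q)).
  { induction m.
    - rewrite Nat.add_0_r. replace (Cpsum u K - Cpsum u K)%C with (RtoC 0) by ring.
      rewrite Cmod_0. simpl. replace (B * (1 - 1) / (1 - q)) with 0 by (field; intro; lra). lra.
    - replace (K + S m)%nat with (S (K + m)) by lia. simpl Cpsum.
      change (Cadd (Cpsum u (K + m)) (u (S (K + m)))) with (Cpsum u (K + m) + u (S (K + m)))%C.
      replace (Cpsum u (K + m) + u (S (K + m)) - Cpsum u K)%C with
        ((Cpsum u (K + m) - Cpsum u K) + u (S (K + m)))%C by ring.
      eapply Rle_trans. apply Cmod_triangle.
      specialize (Hb (S (K + m)) ltac:(lia)). replace (S (K + m) - S K)%nat with m in Hb by lia.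
      replace (B * (1 - q ^ S m) / (1 - q)) with (B * (1 - q ^ m) / (1 - q) + B * q ^ m)
        by (simpl; field; intro; lra). lra. }
  apply Rle_plus_epsilon. intros eps He.
  destruct (Hs eps He) as [N HN]. specialize (HN (K + N)%nat ltac:(lia)).
  change (Cmod (Cpsum u (K + N) - s)%C < eps) in HN.
  specialize (Hp N).
  assert (B * (1 - q ^ N) / (1 - q) <= B / (1 - q)).
  { unfold Rdiv. apply Rmult_le_compat_r. apply Rlt_le, Rinv_0_lt_compat; lra.
    pose proof (pow_le q N (proj1 Hq)). nra. }
  pose proof (Cmod_tri3 s (Cpsum u K) (Cpsum u (K + N))).
  replace (s - Cpsum u (K + N))%C with (- (Cpsum u (K + N) - s))%C in H0 by ring.
  rewrite Cmod_opp in H0. lra.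
Qed.

Lemma coef_bound (a : nat -> C) (F : C -> C) rho : series_on_U a F -> 0 <= rho < 1 ->
  exists M, 0 <= M /\ forall n, Cmod (a n) * rho ^ n <= M.
Proof.
  intros Hs Hr.
  assert (Hu : inU (RtoC rho)).
  { unfold inU. change (Cmod (RtoC rho) < 1). rewrite Cmod_RtoC; lra. }
  destruct (chas_bounded _ _ (Hs _ Hu)) as [M HM].
  exists M. split.
  - specialize (HM 0%nat). eapply Rle_trans; [apply Cmod_ge_0|exact HM].
  - intros n. specialize (HM n).
    change (Cmod (a n * RtoC rho ^ n)%C <= M) in HM.
    rewrite Cmod_mult, Cmod_pow, Cmod_RtoC in HM; lra.
Qed.

Lemma series_at0 (a : nat -> C) (F : C -> C) : series_on_U a F -> F (RtoC 0) = a 0%nat.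
Proof.
  intros Hs.
  assert (Hu : inU (RtoC 0)).
  { unfold inU. change (Cmod (RtoC 0) < 1). rewrite Cmod_0; lra. }
  specialize (Hs _ Hu). rewrite chasE in Hs.
  assert (Hc : forall n, Cpsum (fun n => Cmul (a n) (Cpow (RtoC 0) n)) n = a 0%nat).
  { induction n. simpl. change (a 0%nat * 1 = a 0%nat)%C. ring.
    simpl Cpsum. rewrite IHn. change (a 0%nat + a (S n) * (RtoC 0 * RtoC 0 ^ n) = a 0%nat)%C. ring. }
  assert (Cmod (a 0%nat - F (RtoC 0))%C = 0).
  { apply Rle_antisym; [|apply Cmod_ge_0]. apply Rle_plus_epsilon. intros eps He.
    destruct (Hs eps He) as [N HN]. specialize (HN N (le_n _)). rewrite Hc in HN.
    rewrite Rplus_0_l. lra. }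
  apply Cmod_eq_0 in H. change (@eq C (F (RtoC 0)) (a 0%nat)).
  assert (E : @eq C (F (RtoC 0)) (a 0%nat - (a 0%nat - F (RtoC 0)))%C) by ring.
  rewrite E, H. ring.
Qed.


Definition BO (k : nat) (X : R -> C) : Prop :=
  exists d K, 0 < d /\ forall t, 0 < t < d -> Cmod (X t) <= K * t ^ k.

Lemma BO_ext k (X Y : R -> C) : BO k X ->
  (exists d, 0 < d /\ forall t, 0 < t < d -> X t = Y t) -> BO k Y.
Proof.
  intros [d [K [Hd H]]] [d' [Hd' E]]. exists (Rmin d d'), K. split.
  apply Rmin_pos; auto. intros t Ht. pose proof (Rmin_l d d'). pose proof (Rmin_r d d').
  rewrite <- E by lra. apply H; lra.
Qed.

Lemma BO_add k (X Y : R -> C) : BO k X -> BO k Y -> BO k (fun t => X t + Y t)%C.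
Proof.
  intros [d [K [Hd H]]] [d' [K' [Hd' H']]]. exists (Rmin d d'), (K + K'). split.
  apply Rmin_pos; auto. intros t Ht. pose proof (Rmin_l d d'). pose proof (Rmin_r d d').
  eapply Rle_trans. apply Cmod_triangle. specialize (H t ltac:(lra)). specialize (H' t ltac:(lra)). lra.
Qed.

Lemma BO_opp k (X : R -> C) : BO k X -> BO k (fun t => - X t)%C.
Proof.
  intros [d [K [Hd H]]]. exists d, K. split; auto. intros t Ht. rewrite Cmod_opp. auto.
Qed.

Lemma BO_sub k (X Y : R -> C) : BO k X -> BO k Y -> BO k (fun t => X t - Y t)%C.
Proof. intros. apply (BO_add k X (fun t => - Y t)%C); auto. apply BO_opp; auto. Qed.

Lemma BO_mul j k (X Y : R -> C) : BO j X -> BO k Y -> BO (j + k) (fun t => X t * Y t)%C.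
Proof.
  intros [d [K [Hd H]]] [d' [K' [Hd' H']]]. exists (Rmin d d'), (K * K'). split.
  apply Rmin_pos; auto. intros t Ht. pose proof (Rmin_l d d'). pose proof (Rmin_r d d').
  rewrite Cmod_mult. specialize (H t ltac:(lra)). specialize (H' t ltac:(lra)).
  rewrite pow_add. replace (K * K' * (t ^ j * t ^ k)) with ((K * t ^ j) * (K' * t ^ k)) by ring.
  apply Rmult_le_compat; auto; apply Cmod_ge_0.
Qed.

Lemma pow_le1 t n : 0 <= t <= 1 -> t ^ n <= 1.
Proof. intros H. induction n; simpl. lra. pose proof (pow_le t n ltac:(lra)). nra. Qed.

Lemma BO_weak j k (X : R -> C) : (j <= k)%nat -> BO k X -> BO j X.
Proof.
  intros Hjk [d [K [Hd H]]]. exists (Rmin d 1), (Rabs K). split.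
  apply Rmin_pos; lra. intros t Ht. pose proof (Rmin_l d 1). pose proof (Rmin_r d 1).
  specialize (H t ltac:(lra)). eapply Rle_trans. exact H.
  assert (t ^ k <= t ^ j).
  { replace k with (j + (k - j))%nat by lia. rewrite pow_add.
    pose proof (pow_le t j ltac:(lra)). assert (t ^ (k - j) <= 1).
    { apply pow_le1; lra. }
    nra. }
  pose proof (pow_le t k ltac:(lra)). pose proof (Rle_abs K).
  apply Rle_trans with (Rabs K * t ^ k). nra. apply Rmult_le_compat_l; auto. apply Rabs_pos.
Qed.

Lemma BO_const (c : C) : BO 0 (fun _ => c).
Proof. exists 1, (Cmod c). split. lra. intros. simpl. lra. Qed.

Lemma BO_zero k : BO k (fun _ => RtoC 0).
Proof. exists 1, 0. split. lra. intros. rewrite Cmod_0. lra. Qed.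

Lemma BO_Z : BO 1 (fun t => RtoC t).
Proof. exists 1, 1. split. lra. intros. rewrite Cmod_RtoC; lra. Qed.

Lemma BO_Z0 : BO 0 (fun t => RtoC t).
Proof. apply (BO_weak 0 1). lia. apply BO_Z. Qed.

Lemma BO_pow k n (X : R -> C) : BO k X -> BO (n * k) (fun t => X t ^ n)%C.
Proof.
  intros H. induction n.
  - simpl. apply BO_const.
  - simpl. apply (BO_mul k (n * k) X (fun t => X t ^ n)%C); auto.
Qed.

Lemma BO_divZ k (X : R -> C) : BO (S k) X -> BO k (fun t => X t / RtoC t)%C.
Proof.
  intros [d [K [Hd H]]]. exists d, K. split; auto. intros t Ht.
  assert (RtoC t <> RtoC 0). { intro E. apply RtoC_inj in E. lra. }
  rewrite Cmod_div by auto. rewrite Cmod_RtoC by lra.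
  specialize (H t Ht). simpl in H. apply Rmult_le_reg_r with t. lra.
  unfold Rdiv. rewrite Rmult_assoc, Rinv_l by lra. lra.
Qed.

Lemma BO_unique (c : C) : BO 1 (fun _ => c) -> c = RtoC 0.
Proof.
  intros [d [K [Hd H]]].
  destruct (Req_dec (Cmod c) 0) as [E|E]. apply Cmod_eq_0; auto.
  exfalso. pose proof (Cmod_ge_0 c).
  set (t := Rmin (d / 2) (Cmod c / (2 * (Rabs K + 1)))).
  assert (Ht1 : 0 < t).
  { apply Rmin_pos. lra. apply Rdiv_lt_0_compat. lra. pose proof (Rabs_pos K). lra. }
  pose proof (Rmin_l (d / 2) (Cmod c / (2 * (Rabs K + 1)))).
  pose proof (Rmin_r (d / 2) (Cmod c / (2 * (Rabs K + 1)))).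
  fold t in H1, H2. specialize (H t ltac:(lra)). simpl in H.
  pose proof (Rle_abs K). pose proof (Rabs_pos K).
  assert (t * (2 * (Rabs K + 1)) <= Cmod c).
  { apply Rmult_le_reg_r with (/ (2 * (Rabs K + 1))).
    apply Rinv_0_lt_compat; lra. rewrite Rmult_assoc, Rinv_r by lra. lra. }
  nra.
Qed.

Lemma BO_scal k (c : C) (X : R -> C) : BO k X -> BO k (fun t => c * X t)%C.
Proof. intros H. apply (BO_mul 0 k (fun _ => c) X). apply BO_const. auto. Qed.

Ltac bo0 :=
  first
  [ apply BO_const
  | apply BO_Z0
  | apply (BO_add 0); bo0
  | apply (BO_sub 0); bo0
  | apply (BO_opp 0); bo0
  | apply (BO_mul 0 0); bo0
  | apply (BO_pow 0 _); bo0 ].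


Lemma series_tail_bound (a : nat -> C) (F : C -> C) M K (z : C) :
  series_on_U a F -> (forall n, Cmod (a n) * (1/2) ^ n <= M) -> Cmod z <= 1/4 ->
  Cmod (F z - Cpsum (fun n => a n * z ^ n) K)%C <= 2 * M * 2 ^ (S K) * Cmod z ^ (S K).
Proof.
  intros Hs HM Hz.
  pose proof (Cmod_ge_0 z) as Hz0.
  assert (Hu : inU z). { unfold inU. change (Cmod z < 1). lra. }
  set (q := 2 * Cmod z).
  assert (HM0 : 0 <= M). { specialize (HM 0%nat). pose proof (Cmod_ge_0 (a 0%nat)). simpl in HM. lra. }
  assert (H := chas_tail _ _ K (M * q ^ (S K)) q (Hs z Hu) ltac:(unfold q; lra)).
  assert (Hb : forall n, (K < n)%nat ->
     Cmod (Cmul (a n) (Cpow z n)) <= M * q ^ S K * q ^ (n - S K)).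
  { intros n Hn. rewrite Rmult_assoc, <- pow_add. replace (S K + (n - S K))%nat with n by lia.
    change (Cmod (a n * z ^ n)%C <= M * q ^ n). rewrite Cmod_mult, Cmod_pow.
    specialize (HM n). unfold q. rewrite Rpow_mult_distr.
    replace (Cmod (a n) * Cmod z ^ n) with ((Cmod (a n) * (1/2) ^ n) * 2 ^ n * Cmod z ^ n).
    2:{ replace (Cmod (a n) * (1/2) ^ n * 2 ^ n) with (Cmod (a n) * ((1/2) * 2) ^ n)
          by (rewrite Rpow_mult_distr; ring).
        replace (1/2 * 2) with 1 by field. rewrite pow1. ring. }
    pose proof (pow_le 2 n ltac:(lra)). pose proof (pow_le (Cmod z) n Hz0).
    rewrite Rmult_assoc. apply Rmult_le_compat_r. nra. auto. }
  specialize (H Hb).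
  change (Cmod (F z - Cpsum (fun n => a n * z ^ n) K)%C <= M * q ^ S K / (1 - q)) in H.
  eapply Rle_trans. exact H.
  unfold q. rewrite Rpow_mult_distr.
  pose proof (pow_le 2 (S K) ltac:(lra)). pose proof (pow_le (Cmod z) (S K) Hz0).
  assert (0 <= M * (2 ^ S K * Cmod z ^ S K)) by (apply Rmult_le_pos; nra).
  apply Rmult_le_reg_r with (1 - 2 * Cmod z). lra.
  unfold Rdiv. rewrite Rmult_assoc, Rinv_l by lra. nra.
Qed.

Lemma series_expand (a : nat -> C) (F : C -> C) (zeta : R -> C) K :
  series_on_U a F -> BO 1 zeta ->
  BO (S K) (fun t => F (zeta t) - Cpsum (fun n => a n * zeta t ^ n) K)%C.
Proof.
  intros Hs [d [Kz [Hd HZ]]].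
  destruct (coef_bound a F (1/2) Hs ltac:(lra)) as [M [HM0 HM]].
  exists (Rmin d (1 / (4 * (Rabs Kz + 1)))), (2 * M * 2 ^ S K * Rabs Kz ^ S K). split.
  { apply Rmin_pos. lra. apply Rdiv_lt_0_compat. lra. pose proof (Rabs_pos Kz). lra. }
  intros t Ht. pose proof (Rmin_l d (1 / (4 * (Rabs Kz + 1)))).
  pose proof (Rmin_r d (1 / (4 * (Rabs Kz + 1)))).
  specialize (HZ t ltac:(lra)). simpl in HZ. rewrite Rmult_1_r in HZ.
  pose proof (Rle_abs Kz). pose proof (Rabs_pos Kz).
  assert (Hz : Cmod (zeta t) <= Rabs Kz * t) by nra.
  assert (Hz4 : Cmod (zeta t) <= 1/4).
  { assert (t * (4 * (Rabs Kz + 1)) <= 1).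
    { apply Rmult_le_reg_r with (/ (4 * (Rabs Kz + 1))). apply Rinv_0_lt_compat; lra.
      rewrite Rmult_assoc, Rinv_r by lra. lra. }
    nra. }
  apply Rle_trans with (2 * M * 2 ^ S K * Cmod (zeta t) ^ S K).
  apply series_tail_bound; eauto.
  replace (2 * M * 2 ^ S K * Rabs Kz ^ S K * t ^ S K) with (2 * M * 2 ^ S K * (Rabs Kz * t) ^ S K) by (rewrite Rpow_mult_distr; ring).
  apply Rmult_le_compat_l. pose proof (pow_le 2 (S K) ltac:(lra)). nra.
  apply pow_incr. split. apply Cmod_ge_0. auto.
Qed.


Lemma Cpsum_minus (u v : nat -> C) n :
  Cpsum (fun k => u k - v k)%C n = (Cpsum u n - Cpsum v n)%C.
Proof.
  induction n. reflexivity. simpl Cpsum. rewrite IHn.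
  change ((Cpsum u n - Cpsum v n) + (u (S n) - v (S n)) =
          (Cpsum u n + u (S n)) - (Cpsum v n + v (S n)))%C. ring.
Qed.

Lemma chas_minus (u v : nat -> C) s r : Chas_sum u s -> Chas_sum v r ->
  Chas_sum (fun k => u k - v k)%C (s - r)%C.
Proof.
  rewrite !chasE. intros Hu Hv eps He.
  destruct (Hu (eps/2) ltac:(lra)) as [N1 H1]. destruct (Hv (eps/2) ltac:(lra)) as [N2 H2].
  exists (N1 + N2)%nat. intros n Hn. rewrite Cpsum_minus.
  specialize (H1 n ltac:(lia)). specialize (H2 n ltac:(lia)).
  replace (Cpsum u n - Cpsum v n - (s - r))%C with
    ((Cpsum u n - s) - (Cpsum v n - r))%C by ring.
  pose proof (Cmod_sub_le (Cpsum u n - s)%C (Cpsum v n - r)%C). lra.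
Qed.

Lemma pow_diff (x y : C) s n : Cmod x <= s -> Cmod y <= s ->
  Cmod (x ^ S n - y ^ S n)%C <= INR (S n) * Cmod (x - y)%C * s ^ n.
Proof.
  intros Hx Hy. assert (Hs : 0 <= s) by (pose proof (Cmod_ge_0 x); lra).
  induction n.
  - simpl. replace (x * 1 - y * 1)%C with (x - y)%C by ring. lra.
  - replace (x ^ S (S n) - y ^ S (S n))%C with (x * (x ^ S n - y ^ S n) + (x - y) * y ^ S n)%C
      by (simpl; ring).
    eapply Rle_trans. apply Cmod_triangle. rewrite !Cmod_mult, Cmod_pow.
    pose proof (Cmod_ge_0 (x ^ S n - y ^ S n)%C). pose proof (Cmod_ge_0 (x - y)%C).
    pose proof (Cmod_ge_0 y). pose proof (Cmod_ge_0 x).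
    assert (Cmod y ^ S n <= s ^ S n) by (apply pow_incr; lra).
    assert (Cmod x * Cmod (x ^ S n - y ^ S n)%C <= s * (INR (S n) * Cmod (x - y)%C * s ^ n)).
    { apply Rmult_le_compat; auto. }
    assert (Cmod (x - y)%C * Cmod y ^ S n <= Cmod (x - y)%C * s ^ S n)
      by (apply Rmult_le_compat_l; auto).
    rewrite S_INR. simpl pow in *. nra.
Qed.

Lemma half_bound k : INR (k + 4) * (1/2) ^ k <= 4 * (3/4) ^ k.
Proof.
  induction k. simpl. lra.
  replace (S k + 4)%nat with (S (k + 4)) by lia. rewrite S_INR. simpl pow.
  assert (4 <= INR (k + 4)) by (rewrite plus_INR; pose proof (pos_INR k); simpl; lra).
  set (n := INR (k + 4)) in *.
  set (p := (1/2)^k) in *. set (q := (3/4)^k) in *.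
  assert (0 <= p) by (apply pow_le; lra).
  assert ((n + 1) * (1/2 * p) <= 5/8 * (n * p)) by nra.
  assert (0 <= q) by (apply pow_le; lra).
  nra.
Qed.

Lemma nx_bound k x : 0 <= x <= 1/2 -> INR (k + 4) * x ^ (k + 3) <= 4 * x ^ 3 * (3/4) ^ k.
Proof.
  intros Hx. rewrite pow_add.
  pose proof (half_bound k). pose proof (pow_incr x (1/2) k Hx).
  pose proof (pow_le x k ltac:(lra)). pose proof (pow_le x 3 ltac:(lra)).
  pose proof (pos_INR (k + 4)).
  assert (INR (k + 4) * x ^ k <= INR (k+4) * (1/2) ^ k) by (apply Rmult_le_compat_l; auto).
  nra.
Qed.

Lemma Cpsum3 (u : nat -> C) : Cpsum u 3 = (u 0%nat + u 1%nat + u 2%nat + u 3%nat)%C.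
Proof. reflexivity. Qed.

Lemma RtoC_add x y : RtoC (x + y) = (RtoC x + RtoC y)%C.
Proof. unfold RtoC, Cplus. simpl. f_equal. ring. Qed.

Lemma deriv_expand (a : nat -> C) (F Fp : C -> C) :
  series_on_U a F -> (forall z, inU z -> Cderiv F z (Fp z)) ->
  BO 3 (fun t => Fp (RtoC t) - (a 1%nat + 2 * a 2%nat * RtoC t + 3 * a 3%nat * RtoC t ^ 2))%C.
Proof.
  intros Hs Hd.
  destruct (coef_bound a F (1/2) Hs ltac:(lra)) as [M [HM0 HM]].
  assert (HaM : forall n, Cmod (a n) <= M * 2 ^ n).
  { intros n. specialize (HM n).
    replace (Cmod (a n)) with (Cmod (a n) * (1/2)^n * 2^n).
    pose proof (pow_le 2 n ltac:(lra)). apply Rmult_le_compat_r; auto.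
    rewrite Rmult_assoc, <- Rpow_mult_distr. replace (1/2*2) with 1 by field. rewrite pow1. ring. }
  exists (1/8), (2048 * M). split. lra. intros t Ht.
  apply Rle_plus_epsilon. intros eps He.
  set (z := RtoC t).
  assert (Hzt : Cmod z = t) by (unfold z; apply Cmod_RtoC; lra).
  assert (Hzu : inU z) by (unfold inU; change (Cmod z < 1); lra).
  destruct (Hd z Hzu (eps/2) ltac:(lra)) as [del [Hdel HD]].
  set (A := Cmod (a 2%nat) + 4 * t * Cmod (a 3%nat) + 1).
  assert (HA : 0 < A).
  { unfold A. pose proof (Cmod_ge_0 (a 2%nat)). pose proof (Cmod_ge_0 (a 3%nat)). nra. }
  set (h := Rmin (Rmin (del/2) t) (eps / 2 / A)).
  assert (Hh0 : 0 < h).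
  { unfold h. apply Rmin_pos. apply Rmin_pos; lra. apply Rdiv_lt_0_compat; lra. }
  assert (Hh1 : h <= del / 2) by (unfold h; eapply Rle_trans; [apply Rmin_l|apply Rmin_l]).
  assert (Hh2 : h <= t) by (unfold h; eapply Rle_trans; [apply Rmin_l|apply Rmin_r]).
  assert (Hh3 : h * A <= eps / 2).
  { assert (h <= eps / 2 / A) by (unfold h; apply Rmin_r).
    apply Rmult_le_reg_r with (/ A). apply Rinv_0_lt_compat; lra.
    rewrite Rmult_assoc, Rinv_r by lra. lra. }
  set (H := RtoC h).
  assert (HH : Cmod H = h) by (unfold H; apply Cmod_RtoC; lra).
  assert (HH0 : H <> RtoC 0) by (intro E; unfold H in E; apply RtoC_inj in E; lra).
  specialize (HD H ltac:(change (0 < Cmod H); lra) ltac:(change (Cmod H < del); lra)).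
  change (Cmod ((F (z + H) - F z) / H - Fp z)%C < eps / 2) in HD.
  assert (Hzh : Cmod (z + H)%C = t + h).
  { unfold z, H. rewrite <- RtoC_add. apply Cmod_RtoC. lra. }
  assert (Hzhu : inU (z + H)%C) by (unfold inU; change (Cmod (z + H)%C < 1); lra).
  pose proof (chas_minus _ _ _ _ (Hs _ Hzhu) (Hs _ Hzu)) as Hc.
  change (Chas_sum (fun k => a k * (z + H) ^ k - a k * z ^ k)%C (F (z + H) - F z)%C) in Hc.
  assert (Hb : forall n, (3 < n)%nat ->
     Cmod ((fun k => a k * (z + H) ^ k - a k * z ^ k)%C n) <= 512 * M * h * t ^ 3 * (3/4) ^ (n - 4)).
  { intros n Hn. cbv beta.
    destruct (Nat.le_exists_sub 4 n ltac:(lia)) as [k [Hk _]]. subst n.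
    replace (k + 4 - 4)%nat with k by lia.
    replace (a (k + 4)%nat * (z + H) ^ (k + 4) - a (k + 4)%nat * z ^ (k + 4))%C with
      (a (k + 4)%nat * ((z + H) ^ (k + 4) - z ^ (k + 4)))%C by ring.
    rewrite Cmod_mult.
    pose proof (pow_diff (z + H)%C z (2 * t) (k + 3) ltac:(lra) ltac:(lra)) as Hpd.
    replace (z + H - z)%C with H in Hpd by ring. rewrite HH in Hpd.
    replace (S (k + 3)) with (k + 4)%nat in Hpd by lia.
    specialize (HaM (k + 4)%nat).
    pose proof (Cmod_ge_0 (a (k + 4)%nat)).
    pose proof (Cmod_ge_0 ((z + H) ^ (k + 4) - z ^ (k + 4))%C).
    eapply Rle_trans. apply Rmult_le_compat; eauto.
    pose proof (nx_bound k (4 * t) ltac:(lra)).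
    replace (M * 2 ^ (k + 4) * (INR (k + 4) * h * (2 * t) ^ (k + 3))) with
      (2 * M * h * (INR (k + 4) * (4 * t) ^ (k + 3))).
    2:{ replace (4 * t) with (2 * (2 * t)) by ring. rewrite (Rpow_mult_distr 2 (2 * t)).
        replace (k + 4)%nat with (S (k + 3)) by lia. simpl pow. ring. }
    replace (512 * M * h * t ^ 3 * (3 / 4) ^ k) with (2 * M * h * (4 * (4 * t) ^ 3 * (3 / 4) ^ k))
      by (simpl; ring).
    apply Rmult_le_compat_l. nra. auto. }
  pose proof (chas_tail _ _ 3 _ (3/4) Hc ltac:(lra) Hb) as Ht3.
  rewrite Cpsum3 in Ht3. cbv beta in Ht3.
  set (E := (F (z + H) - F z - (a 0%nat * (z + H) ^ 0 - a 0%nat * z ^ 0 + (a 1%nat * (z + H) ^ 1 - a 1%nat * z ^ 1) +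
              (a 2%nat * (z + H) ^ 2 - a 2%nat * z ^ 2) + (a 3%nat * (z + H) ^ 3 - a 3%nat * z ^ 3)))%C) in Ht3.
  replace (Fp z - (a 1%nat + 2 * a 2%nat * z + 3 * a 3%nat * z ^ 2))%C with
    (- ((F (z + H) - F z) / H - Fp z) + E / H + H * (a 2%nat + a 3%nat * (3 * z + H)))%C.
  2:{ unfold E. field. auto. }
  eapply Rle_trans. apply Cmod_triangle. eapply Rle_trans. apply Rplus_le_compat_r. apply Cmod_triangle.
  rewrite Cmod_opp, Cmod_div, Cmod_mult, HH by auto.
  assert (HE : Cmod E / h <= 2048 * M * t ^ 3).
  { apply Rmult_le_reg_r with h. auto. unfold Rdiv. rewrite Rmult_assoc, Rinv_l by lra.
    replace (2048 * M * t ^ 3 * h) with (512 * M * h * t ^ 3 / (1 - 3/4)) by field. rewrite Rmult_1_r; auto. }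
  assert (Hq : Cmod (a 2%nat + a 3%nat * (3 * z + H))%C <= A).
  { eapply Rle_trans. apply Cmod_triangle. rewrite Cmod_mult.
    replace (3 * z + H)%C with (RtoC (3 * t + h)).
    2:{ unfold z, H. rewrite RtoC_add. unfold RtoC, Cmult, Cplus. simpl. f_equal; ring. }
    rewrite Cmod_RtoC by lra. pose proof (Cmod_ge_0 (a 3%nat)). unfold A. nra. }
  assert (h * Cmod (a 2%nat + a 3%nat * (3 * z + H))%C <= h * A) by (apply Rmult_le_compat_l; lra).
  simpl pow. simpl pow in HE. lra.
Qed.


Lemma RtoC_neq0 t : 0 < t -> RtoC t <> RtoC 0.
Proof. intros Ht E. apply RtoC_inj in E. lra. Qed.

Lemma poly1_zero (d1 : C) : BO 1 (fun t => d1)%C -> d1 = RtoC 0.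
Proof. apply BO_unique. Qed.

Lemma poly2_zero (d1 d2 : C) :
  BO 3 (fun t => d1 * RtoC t + d2 * RtoC t ^ 2)%C -> d1 = RtoC 0 /\ d2 = RtoC 0.
Proof.
  intros H. apply BO_divZ in H.
  assert (H2 : BO 2 (fun t => d1 + d2 * RtoC t)%C).
  { eapply BO_ext. exact H. exists 1. split. lra. intros t Ht.
    field. apply RtoC_neq0; lra. }
  assert (Hd1 : d1 = RtoC 0).
  { apply BO_unique. eapply BO_ext.
    apply (BO_sub 1 (fun t => d1 + d2 * RtoC t)%C (fun t => d2 * RtoC t)%C).
    apply (BO_weak 1 2); auto. apply BO_scal. apply BO_Z.
    exists 1. split. lra. intros. ring. }
  split; auto. subst d1.
  apply BO_divZ in H2. apply BO_unique. eapply BO_ext. apply (BO_weak 1 1). lia. exact H2.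
  exists 1. split. lra. intros t Ht. field. apply RtoC_neq0; lra.
Qed.

Lemma poly3_zero (d1 d2 d3 : C) :
  BO 4 (fun t => d1 * RtoC t + d2 * RtoC t ^ 2 + d3 * RtoC t ^ 3)%C ->
  d1 = RtoC 0 /\ d2 = RtoC 0 /\ d3 = RtoC 0.
Proof.
  intros H. apply BO_divZ in H.
  assert (H2 : BO 3 (fun t => d1 + d2 * RtoC t + d3 * RtoC t ^ 2)%C).
  { eapply BO_ext. exact H. exists 1. split. lra. intros t Ht.
    field. apply RtoC_neq0; lra. }
  assert (Hd1 : d1 = RtoC 0).
  { apply BO_unique. eapply BO_ext.
    apply (BO_sub 1 (fun t => d1 + d2 * RtoC t + d3 * RtoC t ^ 2)%C
                    (fun t => RtoC t * (d2 + d3 * RtoC t))%C).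
    apply (BO_weak 1 3); auto. apply (BO_mul 1 0). apply BO_Z. bo0.
    exists 1. split. lra. intros. ring. }
  subst d1.
  assert (H3 : BO 3 (fun t => d2 * RtoC t + d3 * RtoC t ^ 2)%C).
  { eapply BO_ext. exact H2. exists 1. split. lra. intros. ring. }
  destruct (poly2_zero d2 d3 H3). auto.
Qed.

Lemma Cpsum2 (u : nat -> C) : Cpsum u 2 = (u 0%nat + u 1%nat + u 2%nat)%C.
Proof. reflexivity. Qed.

Lemma bazil_core lam (a c : nat -> C) (F Fp w : C -> C) :
  series_on_U a F -> a 0%nat = RtoC 0 -> a 1%nat = RtoC 1 ->
  (forall z, inU z -> Cderiv F z (Fp z)) ->
  series_on_U c w -> c 0%nat = RtoC 0 -> (forall z, inU z -> inU (w z)) ->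
  (forall z, inU z -> z <> C0 -> bazil lam F Fp z = phi0 (w z)) ->
  Cmod (c 2%nat + c 1%nat * c 1%nat)%C <= 1 ->
  Cmod ((1 + 2 * RtoC lam) * a 3%nat)%C <= 2.
Proof.
  intros Hs Ha0 Ha1 Hd Hc Hc0 HwU Heq Hsch.
  set (A := ((1 + RtoC lam) * a 2%nat)%C).
  set (B := ((1 + 2 * RtoC lam) * a 3%nat)%C).
  pose (X3 := fun t => (F (RtoC t) - (RtoC t + a 2%nat * RtoC t ^ 2 + a 3%nat * RtoC t ^ 3))%C).
  assert (HX3 : BO 4 X3).
  { eapply BO_ext. apply (series_expand a F (fun t => RtoC t) 3 Hs BO_Z).
    exists 1. split. lra. intros t Ht. rewrite Cpsum3. unfold X3. rewrite Ha0, Ha1. ring. }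
  pose (X4 := fun t => (Fp (RtoC t) - (1 + 2 * a 2%nat * RtoC t + 3 * a 3%nat * RtoC t ^ 2))%C).
  assert (HX4 : BO 3 X4).
  { eapply BO_ext. apply (deriv_expand a F Fp Hs Hd).
    exists 1. split. lra. intros t Ht. unfold X4. rewrite Ha1. ring. }
  pose (W0 := fun t => (c 1%nat * RtoC t + c 2%nat * RtoC t ^ 2)%C).
  pose (X6 := fun t => (w (RtoC t) - W0 t)%C).
  assert (HX6 : BO 3 X6).
  { eapply BO_ext. apply (series_expand c w (fun t => RtoC t) 2 Hc BO_Z).
    exists 1. split. lra. intros t Ht. rewrite Cpsum2. unfold X6, W0. rewrite Hc0. ring. }
  pose (P0 := fun t => (1 + A * RtoC t + B * RtoC t ^ 2)%C).
  pose (p := fun t => ((1 - RtoC lam) * (F (RtoC t) / RtoC t) + RtoC lam * Fp (RtoC t))%C).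
  pose (X5 := fun t => (p t - P0 t)%C).
  assert (HX5 : BO 3 X5).
  { eapply BO_ext.
    apply (BO_add 3 (fun t => (1 - RtoC lam) * (X3 t / RtoC t))%C (fun t => RtoC lam * X4 t)%C).
    apply BO_scal. apply BO_divZ. exact HX3. apply BO_scal. exact HX4.
    exists 1. split. lra. intros t Ht. unfold X5, p, P0, X3, X4, A, B. field. apply RtoC_neq0; lra. }
  assert (HW : forall t, 0 < t < 1 -> (p t * (1 - w (RtoC t)) = 1 + w (RtoC t))%C).
  { intros t Ht.
    assert (Hu : inU (RtoC t)) by (unfold inU; change (Cmod (RtoC t) < 1); rewrite Cmod_RtoC; lra).
    assert (Hn : RtoC t <> C0) by (apply RtoC_neq0; lra).
    specialize (Heq _ Hu Hn). specialize (HwU _ Hu).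
    assert (H1 : (1 - w (RtoC t))%C <> RtoC 0).
    { intro E. assert (w (RtoC t) = RtoC 1).
      { change (@eq C (w (RtoC t)) (RtoC 1)).
        replace (w (RtoC t)) with (1 - (1 - w (RtoC t)))%C by ring. rewrite E. ring. }
      unfold inU in HwU. change (Cmod (w (RtoC t)) < 1) in HwU. rewrite H, Cmod_1 in HwU. lra. }
    unfold bazil, phi0 in Heq.
    change ((RtoC (1 - lam) * (F (RtoC t) / RtoC t) + RtoC lam * Fp (RtoC t))%C =
            ((1 + w (RtoC t)) / (1 - w (RtoC t)))%C) in Heq.
    rewrite RtoC_minus in Heq. unfold p. rewrite Heq. field. auto. }
  pose (D := fun t => ((A - 2 * c 1%nat) * RtoC t + (B - 2 * c 2%nat - A * c 1%nat) * RtoC t ^ 2)%C).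
  assert (HD : BO 3 D).
  { eapply BO_ext.
    apply (BO_add 3 (fun t => - (X5 t - X6 t - P0 t * X6 t - X5 t * W0 t - X5 t * X6 t)
                     + (A * c 2%nat + B * c 1%nat) * RtoC t ^ 3)%C
                    (fun t => (B * c 2%nat) * RtoC t ^ 4)%C).
    - apply BO_add. apply BO_opp. apply BO_sub. apply BO_sub. apply BO_sub. apply BO_sub.
      exact HX5. exact HX6. apply (BO_mul 0 3). unfold P0; bo0. exact HX6.
      apply (BO_mul 3 0). exact HX5. unfold W0; bo0.
      apply (BO_weak 3 6). lia. apply (BO_mul 3 3). exact HX5. exact HX6.
      apply BO_scal. apply (BO_pow 1 3). apply BO_Z.
    - apply (BO_weak 3 4). lia. apply BO_scal. apply (BO_pow 1 4). apply BO_Z.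
    - exists 1. split. lra. intros t Ht. specialize (HW t Ht).
      unfold D. transitivity (- (X5 t - X6 t - P0 t * X6 t - X5 t * W0 t - X5 t * X6 t)
                     + (A * c 2%nat + B * c 1%nat) * RtoC t ^ 3 + B * c 2%nat * RtoC t ^ 4
                     + (p t * (1 - w (RtoC t)) - (1 + w (RtoC t))))%C.
      + rewrite HW. ring.
      + unfold X5, X6, P0, W0. ring. }
  destruct (poly2_zero _ _ HD) as [E1 E2].
  assert (EB : B = (2 * (c 2%nat + c 1%nat * c 1%nat))%C).
  { assert (A = 2 * c 1%nat)%C.
    { replace A with ((A - 2 * c 1%nat) + 2 * c 1%nat)%C by ring. rewrite E1. ring. }
    replace B with ((B - 2 * c 2%nat - A * c 1%nat) + 2 * c 2%nat + A * c 1%nat)%C by ring.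
    rewrite E2, H. ring. }
  fold B. rewrite EB, Cmod_mult. rewrite Cmod_R. rewrite Rabs_pos_eq by lra. lra.
Qed.


Lemma inverse_coef (a b : nat -> C) (f g : C -> C) r :
  series_on_U a f -> a 0%nat = RtoC 0 -> a 1%nat = RtoC 1 ->
  series_on_U b g -> b 0%nat = RtoC 0 -> 0 < r ->
  (forall w, Cnorm w < r -> f (g w) = w) ->
  b 1%nat = RtoC 1 /\ b 2%nat = (- a 2%nat)%C /\
  b 3%nat = (2 * a 2%nat * a 2%nat - a 3%nat)%C.
Proof.
  intros Hf Ha0 Ha1 Hg Hb0 Hr Hinv.
  pose (Q := fun t => (b 1%nat * RtoC t + b 2%nat * RtoC t ^ 2 + b 3%nat * RtoC t ^ 3)%C).
  pose (X1 := fun t => (g (RtoC t) - Q t)%C).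
  assert (HX1 : BO 4 X1).
  { eapply BO_ext. apply (series_expand b g (fun t => RtoC t) 3 Hg BO_Z).
    exists 1. split. lra. intros t Ht. rewrite Cpsum3. unfold X1, Q. rewrite Hb0. ring. }
  assert (HQ : BO 1 Q).
  { eapply BO_ext. apply (BO_mul 1 0 (fun t => RtoC t)
       (fun t => b 1%nat + b 2%nat * RtoC t + b 3%nat * RtoC t ^ 2)%C). apply BO_Z. bo0.
    exists 1. split. lra. intros. unfold Q. ring. }
  pose (zeta := fun t => g (RtoC t)).
  assert (Hz : BO 1 zeta).
  { eapply BO_ext. apply (BO_add 1 X1 Q). apply (BO_weak 1 4). lia. exact HX1. exact HQ.
    exists 1. split. lra. intros. unfold X1, zeta. ring. }
  assert (Hz0 : BO 0 zeta) by (apply (BO_weak 0 1); [lia|exact Hz]).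
  assert (HQ0 : BO 0 Q) by (apply (BO_weak 0 1); [lia|exact HQ]).
  pose (X2 := fun t => (f (zeta t) - (zeta t + a 2%nat * zeta t ^ 2 + a 3%nat * zeta t ^ 3))%C).
  assert (HX2 : BO 4 X2).
  { eapply BO_ext. apply (series_expand a f zeta 3 Hf Hz).
    exists 1. split. lra. intros t Ht. rewrite Cpsum3. unfold X2. rewrite Ha0, Ha1. ring. }
  pose (m := fun t => (b 2%nat + b 3%nat * RtoC t)%C).
  pose (Y := fun t => (RtoC t - f (zeta t))%C).
  assert (HY : BO 4 Y).
  { eapply BO_ext. apply (BO_zero 4). exists r. split. auto. intros t Ht.
    unfold Y, zeta. rewrite Hinv. ring. change (Cmod (RtoC t) < r). rewrite Cmod_RtoC; lra. }
  set (d1 := (1 - b 1%nat)%C).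
  set (d2 := (- (b 2%nat + a 2%nat * b 1%nat * b 1%nat))%C).
  set (d3 := (- (b 3%nat + 2 * a 2%nat * b 1%nat * b 2%nat + a 3%nat * b 1%nat * b 1%nat * b 1%nat))%C).
  assert (HD : BO 4 (fun t => d1 * RtoC t + d2 * RtoC t ^ 2 + d3 * RtoC t ^ 3)%C).
  { eapply BO_ext.
    apply (BO_add 4 (fun t => Y t + X2 t + X1 t + a 2%nat * (X1 t * (zeta t + Q t))
                    + a 3%nat * (X1 t * (zeta t ^ 2 + zeta t * Q t + Q t ^ 2)))%C
        (fun t => RtoC t ^ 4 * (a 2%nat * (2 * b 1%nat * b 3%nat + m t ^ 2) +
           a 3%nat * m t * (3 * b 1%nat ^ 2 + 3 * b 1%nat * RtoC t * m t + RtoC t ^ 2 * m t ^ 2)))%C).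
    - apply BO_add. apply BO_add. apply BO_add. apply BO_add. exact HY. exact HX2. exact HX1.
      + apply BO_scal. apply (BO_mul 4 0). exact HX1. apply (BO_add 0). exact Hz0. exact HQ0.
      + apply BO_scal. apply (BO_mul 4 0). exact HX1. apply (BO_add 0). apply (BO_add 0).
        apply (BO_pow 0 2); exact Hz0. apply (BO_mul 0 0). exact Hz0. exact HQ0.
        apply (BO_pow 0 2); exact HQ0.
    - apply (BO_mul 4 0). apply (BO_pow 1 4). apply BO_Z. unfold m. bo0.
    - exists 1. split. lra. intros t Ht. unfold Y, X2, X1, Q, m, d1, d2, d3, zeta. cbv beta. ring. }
  destruct (poly3_zero _ _ _ HD) as [E1 [E2 E3]].
  assert (B1 : b 1%nat = RtoC 1).
  { change (@eq C (b 1%nat) (RtoC 1)).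
    replace (b 1%nat) with (1 - d1)%C by (unfold d1; ring). rewrite E1. ring. }
  assert (B2 : b 2%nat = (- a 2%nat)%C).
  { change (@eq C (b 2%nat) (- a 2%nat)%C).
    replace (b 2%nat) with (- d2 - a 2%nat * b 1%nat * b 1%nat)%C by (unfold d2; ring).
    rewrite E2, B1. ring. }
  split; auto. split; auto.
  change (@eq C (b 3%nat) (2 * a 2%nat * a 2%nat - a 3%nat)%C).
  replace (b 3%nat) with (- d3 - (2 * a 2%nat * b 1%nat * b 2%nat + a 3%nat * b 1%nat * b 1%nat * b 1%nat))%C
    by (unfold d3; ring).
  rewrite E3, B1, B2. ring.
Qed.


Fixpoint csum (f : nat -> C) (n : nat) : C :=
  match n with O => RtoC 0 | S n => (csum f n + f n)%C end.
Fixpoint rsum (f : nat -> R) (n : nat) : R :=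
  match n with O => 0 | S n => rsum f n + f n end.

Lemma csum_ext f g n : (forall k, (k < n)%nat -> f k = g k) -> csum f n = csum g n.
Proof. induction n; intros H; simpl. auto. rewrite IHn, H. auto. lia. intros; apply H; lia. Qed.

Lemma csum_plus f g n : csum (fun k => f k + g k)%C n = (csum f n + csum g n)%C.
Proof. induction n; simpl. ring. rewrite IHn. ring. Qed.

Lemma csum_scal c f n : csum (fun k => c * f k)%C n = (c * csum f n)%C.
Proof. induction n; simpl. ring. rewrite IHn. ring. Qed.

Lemma csum_const c n : csum (fun _ => c) n = (RtoC (INR n) * c)%C.
Proof. induction n; simpl csum. simpl. ring. rewrite IHn, S_INR, RtoC_plus. ring. Qed.

Lemma csum_conj f n : csum (fun k => Cconj (f k)) n = Cconj (csum f n).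
Proof.
  induction n; simpl. unfold Cconj, RtoC; simpl. f_equal; ring.
  rewrite IHn, Cplus_conj. auto.
Qed.

Lemma Re_csum f n : Re (csum f n) = rsum (fun k => Re (f k)) n.
Proof. induction n; simpl. auto. rewrite <- IHn. auto. Qed.

Lemma rsum_le f g n : (forall k, (k < n)%nat -> f k <= g k) -> rsum f n <= rsum g n.
Proof. induction n; intros H; simpl. lra. pose proof (H n ltac:(lia)).
  assert (rsum f n <= rsum g n) by (apply IHn; intros; apply H; lia). lra. Qed.

Lemma rsum_plus f g n : rsum (fun k => f k + g k) n = rsum f n + rsum g n.
Proof. induction n; simpl. ring. rewrite IHn. ring. Qed.

Lemma rsum_const c n : rsum (fun _ => c) n = INR n * c.
Proof. induction n; simpl rsum. simpl; ring. rewrite IHn, S_INR. ring. Qed.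

Lemma csum_geom x n : ((x - 1) * csum (fun k => x ^ k) n = x ^ n - 1)%C.
Proof. induction n; simpl csum. simpl. ring. rewrite Cmult_plus_distr_l, IHn. simpl. ring. Qed.

Lemma Cpow_mul_r (x : C) m n : (x ^ (m * n) = (x ^ m) ^ n)%C.
Proof.
  induction n. rewrite Nat.mul_0_r. reflexivity.
  replace (m * S n)%nat with (m + m * n)%nat by lia. rewrite Cpow_add_r, IHn. reflexivity.
Qed.

Definition zeta (N : nat) : C := (cos (2 * PI / INR N), sin (2 * PI / INR N)).

Lemma zeta_pow N m : (0 < N)%nat ->
  (zeta N ^ m = (cos (2 * PI * INR m / INR N), sin (2 * PI * INR m / INR N)))%C.
Proof.
  intros HN. assert (INR N <> 0) by (apply not_0_INR; lia).
  induction m.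
  - simpl. replace (2 * PI * 0 / INR N) with 0 by (field; auto). rewrite cos_0, sin_0. reflexivity.
  - change (zeta N ^ S m)%C with (zeta N * zeta N ^ m)%C. rewrite IHm. rewrite S_INR. unfold zeta, Cmult. simpl.
    replace (2 * PI * (INR m + 1) / INR N) with (2 * PI / INR N + 2 * PI * INR m / INR N) by (field; auto).
    rewrite cos_plus, sin_plus. f_equal; ring.
Qed.

Lemma zeta_N N : (0 < N)%nat -> (zeta N ^ N = 1)%C.
Proof.
  intros HN. rewrite zeta_pow by auto. assert (INR N <> 0) by (apply not_0_INR; lia).
  replace (2 * PI * INR N / INR N) with (2 * PI) by (field; auto).
  rewrite cos_2PI, sin_2PI. reflexivity.
Qed.

Lemma zeta_neq1 N j : (0 < j < N)%nat -> (zeta N ^ j <> 1)%C.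
Proof.
  intros Hj E. rewrite zeta_pow in E by lia.
  injection E as E1 E2.
  assert (HN : 0 < INR N) by (apply lt_0_INR; lia).
  assert (Hj0 : 0 < INR j) by (apply lt_0_INR; lia).
  assert (HjN : INR j < INR N) by (apply lt_INR; lia).
  set (x := 2 * PI * INR j / INR N) in *.
  assert (0 < x < 2 * PI).
  { pose proof PI_RGT_0. unfold x. split. apply Rdiv_lt_0_compat; nra.
    apply Rmult_lt_reg_r with (INR N). auto. unfold Rdiv. rewrite Rmult_assoc, Rinv_l by lra. nra. }
  destruct (sin_eq_O_2PI_0 x ltac:(lra) ltac:(lra) E2) as [H1|[H1|H1]]; try lra.
  rewrite H1, cos_PI in E1. lra.
Qed.

Lemma C1pow n : (RtoC 1 ^ n = 1)%C.
Proof. induction n. reflexivity. simpl. rewrite IHn. ring. Qed.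

Lemma root_sum N j : (0 < j < N)%nat -> csum (fun k => (zeta N ^ k) ^ j)%C N = RtoC 0.
Proof.
  intros Hj.
  assert (E : csum (fun k => (zeta N ^ k) ^ j)%C N = csum (fun k => (zeta N ^ j) ^ k)%C N).
  { apply csum_ext. intros. rewrite <- !Cpow_mul_r. rewrite Nat.mul_comm. auto. }
  rewrite E. pose proof (csum_geom (zeta N ^ j) N) as G.
  rewrite <- Cpow_mul_r, Nat.mul_comm, Cpow_mul_r, zeta_N in G by lia.
  assert (Hn : (zeta N ^ j - 1)%C <> RtoC 0).
  { intro F. apply (zeta_neq1 N j Hj). change (@eq C (zeta N ^ j)%C 1).
    replace (zeta N ^ j)%C with ((zeta N ^ j - 1) + 1)%C by ring. rewrite F. ring. }
  rewrite C1pow in G.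
  replace (RtoC 1 - 1)%C with (RtoC 0) in G by ring.
  set (S0 := csum (fun k => (zeta N ^ j) ^ k)%C N) in *.
  change (@eq C S0 (RtoC 0)).
  replace S0 with (/ (zeta N ^ j - 1) * ((zeta N ^ j - 1) * S0))%C by (field; auto).
  rewrite G. ring.
Qed.


Lemma Cmod_zeta N : Cmod (zeta N) = 1.
Proof.
  unfold Cmod, zeta. simpl. pose proof (sin2_cos2 (2 * PI / INR N)). unfold Rsqr in H.
  replace (cos (2 * PI / INR N) * (cos (2 * PI / INR N) * 1) +
           sin (2 * PI / INR N) * (sin (2 * PI / INR N) * 1)) with 1 by lra.
  apply sqrt_1.
Qed.

Lemma e_conj N k : (zeta N ^ k * Cconj (zeta N ^ k) = 1)%C.
Proof.
  rewrite <- Cmod2_conj, Cmod_pow, Cmod_zeta, pow1. simpl. f_equal. 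
  unfold RtoC. f_equal; ring.
Qed.

Lemma L_eq N m : csum (fun k => (zeta N ^ k) ^ m * Cconj (zeta N ^ k) ^ m)%C N = RtoC (INR N).
Proof.
  rewrite (csum_ext _ (fun _ => RtoC 1)). rewrite csum_const. ring.
  intros k _. rewrite <- Cpow_mult_l, e_conj, C1pow. auto.
Qed.

Lemma L_ne N m j : (m <> j)%nat -> (m < j + N)%nat -> (j < m + N)%nat ->
  csum (fun k => (zeta N ^ k) ^ m * Cconj (zeta N ^ k) ^ j)%C N = RtoC 0.
Proof.
  intros H1 H2 H3. destruct (le_lt_dec j m).
  - rewrite (csum_ext _ (fun k => (zeta N ^ k) ^ (m - j))%C). apply root_sum. lia.
    intros k _. replace m with ((m - j) + j)%nat at 1 by lia.
    rewrite Cpow_add_r, <- Cmult_assoc, <- Cpow_mult_l, e_conj, C1pow. apply Cmult_1_r.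
  - rewrite (csum_ext _ (fun k => Cconj ((zeta N ^ k) ^ (j - m)))%C).
    rewrite csum_conj, root_sum by lia. unfold Cconj, RtoC. simpl. f_equal. ring.
    intros k _. replace j with (m + (j - m))%nat at 1 by lia.
    rewrite Cpow_add_r, Cmult_assoc, <- Cpow_mult_l, e_conj, C1pow, (Cpow_conj (zeta N ^ k) (j - m)). apply Cmult_1_l.
Qed.

Lemma csum_Cpsum (F : nat -> nat -> C) K N :
  csum (fun k => Cpsum (fun n => F n k) K) N = Cpsum (fun n => csum (fun k => F n k) N) K.
Proof.
  induction K.
  - reflexivity.
  - change (csum (fun k => (Cpsum (fun n => F n k) K + F (S K) k)%C) N =
            (Cpsum (fun n => csum (fun k => F n k) N) K + csum (fun k => F (S K) k) N)%C).
    rewrite csum_plus, IHK. reflexivity.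
Qed.

Lemma Cpsum_first3 (u : nat -> C) K : (2 <= K)%nat ->
  (forall n, (3 <= n <= K)%nat -> u n = RtoC 0) -> Cpsum u K = (u 0%nat + u 1%nat + u 2%nat)%C.
Proof.
  intros HK Hu. induction K. lia.
  destruct (Nat.eq_dec K 1). subst. reflexivity.
  change (@eq C (Cpsum u K + u (S K))%C (u 0%nat + u 1%nat + u 2%nat)%C).
  rewrite IHK by (lia || (intros; apply Hu; lia)). rewrite (Hu (S K)) by lia. ring.
Qed.

Lemma Re_sq x : Re (x * Cconj x)%C = Cmod x ^ 2.
Proof. rewrite Cmod2_alt. destruct x as [x1 x2]. unfold Re, Im, Cconj, Cmult. simpl. ring. Qed.

Lemma ineq_ii x y : 2 * Re (x * Cconj y)%C - Cmod y ^ 2 <= Cmod x ^ 2.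
Proof.
  rewrite !Cmod2_alt. destruct x as [x1 x2], y as [y1 y2]. unfold Re, Im, Cconj, Cmult. simpl.
  pose proof (Rle_0_sqr (x1 - y1)). pose proof (Rle_0_sqr (x2 - y2)). unfold Rsqr in *. nra.
Qed.

Lemma Cconj_RtoC r : Cconj (RtoC r) = RtoC r.
Proof. unfold Cconj, RtoC. simpl. f_equal. ring. Qed.

Lemma Cmod_1pz (s z : C) r : Cmod z = r -> 0 <= r <= 1 -> Cmod (1 + s * z)%C <= 1 + Cmod s.
Proof.
  intros Hz Hr. eapply Rle_trans. apply Cmod_triangle. rewrite Cmod_1, Cmod_mult, Hz.
  pose proof (Cmod_ge_0 s). nra.
Qed.


Lemma RtoC_pow r n : RtoC (r ^ n) = (RtoC r ^ n)%C.
Proof. induction n. reflexivity. simpl. rewrite RtoC_mult, IHn. reflexivity. Qed.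

Lemma Cpsum_mult_r (u : nat -> C) y K :
  (Cpsum u K * y)%C = Cpsum (fun n => u n * y)%C K.
Proof.
  induction K. reflexivity.
  change ((Cpsum u K + u (S K)) * y = Cpsum (fun n => u n * y)%C K + u (S K) * y)%C.
  rewrite <- IHK. ring.
Qed.

Lemma rsum_lin (f g : nat -> R) a b n :
  rsum (fun k => a * f k + b * g k) n = a * rsum f n + b * rsum g n.
Proof. induction n; simpl. ring. rewrite IHn. ring. Qed.

Lemma Cconj_1 : Cconj (RtoC 1) = RtoC 1.
Proof. apply Cconj_RtoC. Qed.

Lemma Cpsum_ext (u v : nat -> C) K : (forall n, u n = v n) -> Cpsum u K = Cpsum v K.
Proof. intros H. induction K; simpl. apply H. rewrite IHK, H. auto. Qed.

Section Sums.
Variable N : nat.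
Hypothesis HN : (3 <= N)%nat.
Let e k := (zeta N ^ k)%C.
Let Et m j k := ((e k) ^ m * Cconj (e k) ^ j)%C.
Let E m j := csum (Et m j) N.

Lemma E_eq m : E m m = RtoC (INR N).
Proof. apply L_eq. Qed.
Lemma E_ne m j : (m <> j)%nat -> (m < j + N)%nat -> (j < m + N)%nat -> E m j = RtoC 0.
Proof. intros. apply L_ne; auto. Qed.

Lemma sum_C3 (s : C) r :
  csum (fun k => (1 + s * (RtoC r * e k)) * Cconj (1 + s * (RtoC r * e k)))%C N =
  (RtoC (INR N) * (1 + s * Cconj s * RtoC r ^ 2))%C.
Proof.
  rewrite (csum_ext _ (fun k => Et 0 0 k + (s * RtoC r) * Et 1 0 k + (Cconj s * RtoC r) * Et 0 1 k
                                + (s * Cconj s * RtoC r ^ 2) * Et 1 1 k)%C).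
  - rewrite !csum_plus, !csum_scal. fold (E 0 0) (E 1 0) (E 0 1) (E 1 1).
    rewrite !E_eq, (E_ne 1 0), (E_ne 0 1) by lia. ring.
  - intros k _. unfold Et. rewrite Cplus_conj, !Cmult_conj, Cconj_1, Cconj_RtoC.
    set (x := e k). ring.
Qed.

Lemma sum_C2 (c1 b : C) r :
  csum (fun k => (c1 * (RtoC r * e k) + b * (RtoC r * e k) ^ 2) *
                 Cconj (c1 * (RtoC r * e k) + b * (RtoC r * e k) ^ 2))%C N =
  (RtoC (INR N) * (c1 * Cconj c1 * RtoC r ^ 2 + b * Cconj b * RtoC r ^ 4))%C.
Proof.
  rewrite (csum_ext _ (fun k => (c1 * Cconj c1 * RtoC r ^ 2) * Et 1 1 k
        + (c1 * Cconj b * RtoC r ^ 3) * Et 1 2 k + (b * Cconj c1 * RtoC r ^ 3) * Et 2 1 k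
        + (b * Cconj b * RtoC r ^ 4) * Et 2 2 k)%C).
  - rewrite !csum_plus, !csum_scal. fold (E 1 1) (E 1 2) (E 2 1) (E 2 2).
    rewrite !E_eq, (E_ne 1 2), (E_ne 2 1) by lia. ring.
  - intros k _. unfold Et. rewrite !Cplus_conj, !Cmult_conj, !Cpow_conj, !Cmult_conj, !Cconj_RtoC.
    set (x := e k). ring.
Qed.

Lemma sum_C1 (c : nat -> C) (s : C) r K :
  (2 <= K)%nat -> (K + 3 <= N)%nat -> c 0%nat = RtoC 0 ->
  csum (fun k => (Cpsum (fun n => c n * (RtoC r * e k) ^ n)%C K * (1 + s * (RtoC r * e k))) *
      Cconj (c 1%nat * (RtoC r * e k) + (c 2%nat + s * c 1%nat) * (RtoC r * e k) ^ 2))%C N =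
  (RtoC (INR N) * (c 1%nat * Cconj (c 1%nat) * RtoC r ^ 2 +
      (c 2%nat + s * c 1%nat) * Cconj (c 2%nat + s * c 1%nat) * RtoC r ^ 4))%C.
Proof.
  intros HK HKN Hc0.
  set (b := (c 2%nat + s * c 1%nat)%C).
  set (cb := Cconj b). set (cc := Cconj (c 1%nat)).
  set (val := fun n => (c n * RtoC r ^ n * (cc * RtoC r * E n 1 + cc * s * RtoC r ^ 2 * E (S n) 1
                 + cb * RtoC r ^ 2 * E n 2 + cb * s * RtoC r ^ 3 * E (S n) 2))%C).
  transitivity (Cpsum val K).
  - rewrite (csum_ext _ (fun k => Cpsum (fun n => c n * (RtoC r * e k) ^ n *
          ((1 + s * (RtoC r * e k)) * Cconj (c 1%nat * (RtoC r * e k) + b * (RtoC r * e k) ^ 2)))%C K)).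
    2:{ intros k _. rewrite <- Cpsum_mult_r. fold b. ring. }
    rewrite (csum_Cpsum (fun n k => c n * (RtoC r * e k) ^ n *
          ((1 + s * (RtoC r * e k)) * Cconj (c 1%nat * (RtoC r * e k) + b * (RtoC r * e k) ^ 2)))%C).
    apply Cpsum_ext. intros n. unfold val.
    rewrite (csum_ext _ (fun k => (c n * RtoC r ^ n) * (((cc * RtoC r) * Et n 1 k + (cc * s * RtoC r ^ 2) * Et (S n) 1 k)
                 + ((cb * RtoC r ^ 2) * Et n 2 k + (cb * s * RtoC r ^ 3) * Et (S n) 2 k)))%C).
    + rewrite csum_scal, !csum_plus, !csum_scal. fold (E n 1) (E (S n) 1) (E n 2) (E (S n) 2). ring.
    + intros k _. unfold Et. rewrite Cpow_mult_l. rewrite !Cplus_conj, !Cmult_conj, !Cpow_conj, !Cmult_conj, !Cconj_RtoC.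
      fold cc cb. change ((e k) ^ S n)%C with (e k * (e k) ^ n)%C.
      set (x := e k). set (xn := (x ^ n)%C). ring.
  - rewrite Cpsum_first3; [ | exact HK | ].
    + unfold val. rewrite Hc0.
      rewrite (E_eq 1), (E_eq 2), (E_ne 2 1), (E_ne 1 2), (E_ne 3 1), (E_ne 3 2) by lia.
      unfold b. ring.
    + intros n Hn. unfold val. rewrite (E_ne n 1), (E_ne (S n) 1), (E_ne n 2), (E_ne (S n) 2) by lia.
      ring.
Qed.

End Sums.


Lemma Re_RtoC_mult x (X : C) : Re (RtoC x * X)%C = x * Re X.
Proof. destruct X. unfold Re, RtoC, Cmult. simpl. ring. Qed.

Lemma Re_conj_sq (x : C) r n : Re (x * Cconj x * RtoC r ^ n)%C = Cmod x ^ 2 * r ^ n.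
Proof.
  rewrite <- RtoC_pow. rewrite re_scal_r. rewrite Re_sq. auto.
Qed.

Lemma schwarz_step (c : nat -> C) (w : C -> C) r s :
  series_on_U c w -> c 0%nat = RtoC 0 -> (forall z, inU z -> Cmod (w z) < 1) -> 0 < r < 1 ->
  Cmod (c 1%nat) ^ 2 * r ^ 2 + Cmod (c 2%nat + s * c 1%nat)%C ^ 2 * r ^ 4 <= 1 + Cmod s ^ 2 * r ^ 2.
Proof.
  intros Hs Hc0 Hw Hr.
  apply Rle_plus_epsilon. intros eps He.
  set (rho := (1 + r) / 2).
  destruct (coef_bound c w rho Hs ltac:(unfold rho; lra)) as [M [HM0 HM]].
  set (q := r / rho).
  assert (Hq : 0 < q < 1).
  { unfold q, rho. split. apply Rdiv_lt_0_compat; lra.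
    apply Rmult_lt_reg_r with ((1+r)/2). lra. unfold Rdiv at 1. rewrite Rmult_assoc, Rinv_l by lra. lra. }
  assert (Hrq : r = rho * q) by (unfold q; field; unfold rho; lra).
  pose proof (Cmod_ge_0 s) as Hs0.
  set (L := 3 * (1 + Cmod s) ^ 2).
  assert (HL : 0 < L) by (unfold L; nra).
  set (mn := Rmin 1 (eps / L)).
  assert (Hmn : 0 < mn) by (unfold mn; apply Rmin_pos; [lra | apply Rdiv_lt_0_compat; lra]).
  assert (Hmn1 : mn <= 1) by apply Rmin_l.
  assert (Hmn2 : mn * L <= eps).
  { assert (mn <= eps / L) by apply Rmin_r.
    apply Rmult_le_reg_r with (/ L). apply Rinv_0_lt_compat; lra.
    rewrite Rmult_assoc, Rinv_r by lra. lra. }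
  set (y := mn * (1 - q) / (M + 1)).
  assert (Hy : 0 < y) by (unfold y; apply Rdiv_lt_0_compat; nra).
  destruct (pow_lt_1_zero q ltac:(rewrite Rabs_pos_eq; lra) y Hy) as [N0 HN0].
  set (K := (N0 + 2)%nat).
  set (tau := M * q ^ S K / (1 - q)).
  assert (Hqk : 0 <= q ^ S K < y).
  { split. apply pow_le; lra. specialize (HN0 (S K) ltac:(unfold K; lia)).
    rewrite Rabs_pos_eq in HN0 by (apply pow_le; lra). auto. }
  assert (Htau0 : 0 <= tau) by (unfold tau; apply Rmult_le_pos; [nra | apply Rlt_le, Rinv_0_lt_compat; lra]).
  assert (Htau : tau <= mn).
  { unfold tau. apply Rle_trans with (M * y / (1 - q)).
    unfold Rdiv. apply Rmult_le_compat_r. apply Rlt_le, Rinv_0_lt_compat; lra. nra.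
    unfold y. replace (M * (mn * (1 - q) / (M + 1)) / (1 - q)) with (mn * (M / (M + 1))) by (field; lra).
    assert (M / (M + 1) <= 1). { apply Rmult_le_reg_r with (M + 1). lra. unfold Rdiv. rewrite Rmult_assoc, Rinv_l by lra. lra. }
    nra. }
  set (N := (K + 3)%nat).
  set (e := fun k => (zeta N ^ k)%C).
  set (z := fun k => (RtoC r * e k)%C).
  assert (Hz : forall k, Cmod (z k) = r).
  { intros k. unfold z, e. rewrite Cmod_mult, Cmod_pow, Cmod_zeta, pow1, Cmod_RtoC; lra. }
  set (P := fun x : C => Cpsum (fun n => c n * x ^ n)%C K).
  assert (HP : forall k, Cmod (w (z k) - P (z k))%C <= tau).
  { intros k. assert (Hu : inU (z k)) by (unfold inU; change (Cmod (z k) < 1); rewrite Hz; lra).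
    apply (chas_tail _ _ K (M * q ^ S K) q (Hs _ Hu) ltac:(lra)).
    intros n Hn. change (Cmod (c n * z k ^ n)%C <= M * q ^ S K * q ^ (n - S K)).
    rewrite Rmult_assoc, <- pow_add. replace (S K + (n - S K))%nat with n by lia.
    rewrite Cmod_mult, Cmod_pow, Hz, Hrq, Rpow_mult_distr, <- Rmult_assoc.
    apply Rmult_le_compat_r. apply pow_le; lra. apply HM. }
  set (beta := (c 2%nat + s * c 1%nat)%C).
  set (T := fun k => (P (z k) * (1 + s * z k))%C).
  set (u := fun k => (c 1%nat * z k + beta * z k ^ 2)%C).
  assert (Hi : forall k, Cmod (T k) ^ 2 <= Re ((1 + s * z k) * Cconj (1 + s * z k))%C + tau * L).
  { intros k. rewrite Re_sq. unfold T. rewrite Cmod_mult.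
    assert (Ha : Cmod (P (z k)) <= 1 + tau).
    { pose proof (HP k). pose proof (Hw (z k) ltac:(unfold inU; change (Cmod (z k) < 1); rewrite Hz; lra)).
      replace (P (z k)) with (w (z k) - (w (z k) - P (z k)))%C by ring.
      pose proof (Cmod_sub_le (w (z k)) (w (z k) - P (z k))%C). lra. }
    pose proof (Cmod_1pz s (z k) r (Hz k) ltac:(lra)) as Hb.
    set (a0 := Cmod (P (z k))) in *. set (b0 := Cmod (1 + s * z k)%C) in *.
    assert (0 <= a0) by apply Cmod_ge_0. assert (0 <= b0) by apply Cmod_ge_0.
    assert (b0 ^ 2 <= (1 + Cmod s) ^ 2) by (apply pow_incr; lra).
    assert ((a0 * b0) ^ 2 <= ((1 + tau) * b0) ^ 2) by (apply pow_incr; split; nra).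
    assert (((1 + tau) * b0) ^ 2 <= b0 ^ 2 + 3 * tau * b0 ^ 2).
    { assert (tau <= 1) by lra. assert (0 <= b0 ^ 2) by (apply pow_le; lra).
      replace (((1 + tau) * b0) ^ 2) with (b0 ^ 2 + (2 * tau + tau * tau) * b0 ^ 2) by ring.
      assert (0 <= (tau - tau * tau) * b0 ^ 2) by (apply Rmult_le_pos; nra). nra. }
    assert (3 * tau * b0 ^ 2 <= 3 * tau * (1 + Cmod s) ^ 2) by (apply Rmult_le_compat_l; lra).
    unfold L. lra. }
  assert (Hii : forall k, 2 * Re (T k * Cconj (u k))%C + (-1) * Re (u k * Cconj (u k))%C <= Cmod (T k) ^ 2).
  { intros k. rewrite Re_sq. pose proof (ineq_ii (T k) (u k)). lra. }
  pose proof (rsum_le (fun k => 2 * Re (T k * Cconj (u k))%C + (-1) * Re (u k * Cconj (u k))%C)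
                     (fun k => 1 * Re ((1 + s * z k) * Cconj (1 + s * z k))%C + (tau * L) * 1) N
                     ltac:(intros k _; cbv beta; pose proof (Hii k); pose proof (Hi k); lra)) as Hsum.
  rewrite !rsum_lin, <- !Re_csum, rsum_const in Hsum.
  assert (C1 : csum (fun k => T k * Cconj (u k))%C N =
     (RtoC (INR N) * (c 1%nat * Cconj (c 1%nat) * RtoC r ^ 2 + beta * Cconj beta * RtoC r ^ 4))%C).
  { unfold T, u, P, z, beta. apply sum_C1; unfold N, K; lia || auto. }
  assert (C2 : csum (fun k => u k * Cconj (u k))%C N =
     (RtoC (INR N) * (c 1%nat * Cconj (c 1%nat) * RtoC r ^ 2 + beta * Cconj beta * RtoC r ^ 4))%C).
  { unfold u, z. apply sum_C2. unfold N; lia. }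
  assert (C3 : csum (fun k => (1 + s * z k) * Cconj (1 + s * z k))%C N =
     (RtoC (INR N) * (1 + s * Cconj s * RtoC r ^ 2))%C).
  { unfold z. apply sum_C3. unfold N; lia. }
  rewrite C1, C2, C3, !Re_RtoC_mult in Hsum.
  rewrite re_plus, !Re_conj_sq in Hsum.
  replace (Re (1 + s * Cconj s * RtoC r ^ 2)%C) with (1 + Cmod s ^ 2 * r ^ 2) in Hsum.
  2:{ rewrite re_plus, Re_conj_sq. simpl. auto. }
  assert (HNp : 0 < INR N) by (apply lt_0_INR; unfold N; lia).
  fold beta. 
  assert (tau * L <= eps) by nra.
  nra.
Qed.


Lemma limit_r x y zz : 0 <= x -> 0 <= y -> 0 <= zz ->
  (forall r, 0 < r < 1 -> x * r ^ 2 + y * r ^ 4 <= 1 + zz * r ^ 2) -> x + y <= 1 + zz.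
Proof.
  intros Hx Hy Hz H. destruct (Rle_lt_dec (x + y) (1 + zz)) as [|Hc]; auto. exfalso.
  set (th := (1 + zz) / (x + y)).
  assert (Hth : 0 < th < 1).
  { unfold th. split. apply Rdiv_lt_0_compat; lra.
    apply Rmult_lt_reg_r with (x + y). lra. unfold Rdiv. rewrite Rmult_assoc, Rinv_l by lra. lra. }
  set (d := (1 - th) / 8). set (r := 1 - d).
  assert (Hr : 0 < r < 1) by (unfold r, d; lra).
  specialize (H r Hr).
  assert (H2 : (1 - d) ^ 2 >= 1 - 2 * d) by nra.
  assert (H4 : r ^ 4 >= 1 - 4 * d).
  { unfold r. replace ((1 - d) ^ 4) with (((1 - d) ^ 2) ^ 2) by ring.
    assert (0 <= 1 - 2 * d) by (unfold d; lra). nra. }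
  assert (Hr4 : r ^ 4 > th) by (unfold d in H4; lra).
  assert (Hr24 : r ^ 4 <= r ^ 2) by (replace (r ^ 4) with (r ^ 2 * r ^ 2) by ring;
                                     pose proof (pow_le r 2 ltac:(lra)); assert (r ^ 2 <= 1) by nra; nra).
  assert (Hr2 : r ^ 2 <= 1) by nra.
  assert (x * r ^ 2 >= x * r ^ 4) by nra.
  assert ((x + y) * r ^ 4 > (x + y) * th) by nra.
  assert ((x + y) * th = 1 + zz) by (unfold th; field; lra).
  nra.
Qed.

Lemma schwarz_coef (c : nat -> C) (w : C -> C) :
  series_on_U c w -> c 0%nat = RtoC 0 -> (forall z, inU z -> Cmod (w z) < 1) ->
  Cmod (c 2%nat + c 1%nat * c 1%nat)%C <= 1.
Proof.
  intros Hs Hc0 Hw.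
  assert (Hstep : forall s, Cmod (c 1%nat) ^ 2 + Cmod (c 2%nat + s * c 1%nat)%C ^ 2 <= 1 + Cmod s ^ 2).
  { intros s. apply limit_r; try (apply pow_le, Cmod_ge_0).
    intros r Hr. apply (schwarz_step c w); auto. }
  set (a := c 1%nat) in *. set (b := c 2%nat) in *.
  set (x := Cmod a ^ 2). set (B := Cmod b ^ 2).
  assert (Hx0 : 0 <= x) by (apply pow_le, Cmod_ge_0).
  assert (HB0 : 0 <= B) by (apply pow_le, Cmod_ge_0).
  assert (Hgen : forall mu, 0 <= mu -> x + B * (1 + mu * x) ^ 2 <= 1 + mu ^ 2 * x * B).
  { intros mu Hmu. specialize (Hstep (RtoC mu * Cconj a * b)%C).
    replace (b + RtoC mu * Cconj a * b * a)%C with (b * (1 + RtoC mu * (a * Cconj a)))%C in Hstep by ring.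
    rewrite <- Cmod2_conj in Hstep. fold x in Hstep.
    replace (1 + RtoC mu * RtoC x)%C with (RtoC (1 + mu * x)) in Hstep
      by (rewrite RtoC_plus, RtoC_mult; reflexivity).
    rewrite !Cmod_mult, Cmod_R, Cmod_R, Cmod_conj, Rabs_pos_eq in Hstep by nra.
    rewrite Rabs_pos_eq in Hstep by lra. unfold x, B. unfold x in Hstep.
    replace ((Cmod b * (1 + mu * Cmod a ^ 2)) ^ 2) with (Cmod b ^ 2 * (1 + mu * Cmod a ^ 2) ^ 2) in Hstep by ring.
    replace ((mu * Cmod a * Cmod b) ^ 2) with (mu ^ 2 * Cmod a ^ 2 * Cmod b ^ 2) in Hstep by ring.
    exact Hstep. }
  assert (HA : x + B <= 1) by (specialize (Hgen 0 ltac:(lra)); simpl in Hgen; lra).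
  assert (Hb : Cmod b <= 1 - x).
  { destruct (Req_dec x 1) as [E|E].
    - specialize (Hgen 1 ltac:(lra)). rewrite E in Hgen.
      assert (B <= 0) by nra. assert (Cmod b ^ 2 = 0) by (fold B; lra).
      pose proof (Cmod_ge_0 b). assert (Cmod b = 0) by nra. lra.
    - set (A := 1 - x). assert (HA0 : 0 < A) by (unfold A; lra).
      specialize (Hgen (/ A) ltac:(apply Rlt_le, Rinv_0_lt_compat; lra)).
      replace (1 + / A * x) with (/ A) in Hgen by (unfold A; field; lra).
      assert (Hk : B <= A ^ 2).
      { apply Rmult_le_reg_r with (/ A ^ 2 * (1 - x)).
        apply Rmult_lt_0_compat. apply Rinv_0_lt_compat. nra. unfold A in HA0; lra.
        replace (A ^ 2 * (/ A ^ 2 * (1 - x))) with A by (unfold A; field; lra).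
        replace ((/ A) ^ 2) with (/ A ^ 2) in Hgen by (field; lra).
        fold A. nra. }
      pose proof (Cmod_ge_0 b). unfold B in Hk. fold A. nra. }
  eapply Rle_trans. apply Cmod_triangle. rewrite Cmod_mult.
  unfold x in Hb. simpl in Hb. lra.
Qed.




Lemma kC lam : 0 <= 1 + 2 * lam -> forall X : C, Cmod ((1 + 2 * RtoC lam) * X)%C = (1 + 2 * lam) * Cmod X.
Proof.
  intros H X. replace (1 + 2 * RtoC lam)%C with (RtoC (1 + 2 * lam)).
  rewrite Cmod_mult, Cmod_R, Rabs_pos_eq; auto.
  rewrite RtoC_plus, RtoC_mult. reflexivity.
Qed.

Lemma bazil_apply lam (a : nat -> C) (F Fp : C -> C) :
  series_on_U a F -> a 0%nat = RtoC 0 -> a 1%nat = RtoC 1 ->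
  (forall z, inU z -> Cderiv F z (Fp z)) ->
  subordinate (bazil lam F Fp) phi0 ->
  Cmod ((1 + 2 * RtoC lam) * a 3%nat)%C <= 2.
Proof.
  intros Hs Ha0 Ha1 Hd [w [[[c Hc] [Hw0 HwU]] Heq]].
  assert (Hc0 : c 0%nat = RtoC 0).
  { rewrite <- (series_at0 c w Hc). exact Hw0. }
  apply (bazil_core lam a c F Fp w); auto.
  apply (schwarz_coef c w); auto.
Qed.

Theorem corollary3p20 (lam : R) (a : nat -> Cplx) (f g : Cplx -> Cplx) :
  1 <= lam ->
  in_B_Sigma lam a f g ->
  Cnorm (a 3%nat) <= 2 / (2 * lam + 1) /\
  Cnorm (Csub (a 3%nat) (Cmul (a 2%nat) (a 2%nat))) <= 2 / (2 * lam + 1).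
Proof.
  intros Hl [[Ha0 [Ha1 [Hsf [Hunf [[b Hsg] [Hung [r [Hr Hinv]]]]]]]] [[fp [Hfp Hsubf]] [gp [Hgp Hsubg]]]].
  pose proof (bazil_apply lam a f fp Hsf Ha0 Ha1 Hfp Hsubf) as Hf3.
  assert (Hb0 : b 0%nat = RtoC 0).
  { rewrite <- (series_at0 b g Hsg).
    assert (H0 : Cnorm (RtoC 0) < r) by (change (Cmod (RtoC 0) < r); rewrite Cmod_0; lra).
    destruct (Hinv _ H0) as [Hg0 Hfg0].
    assert (Hf0 : f (RtoC 0) = RtoC 0) by (rewrite (series_at0 a f Hsf); exact Ha0).
    apply Hunf; auto. unfold inU. change (Cmod (RtoC 0) < 1). rewrite Cmod_0; lra.
    rewrite Hfg0. symmetry. exact Hf0. }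
  destruct (inverse_coef a b f g r Hsf Ha0 Ha1 Hsg Hb0 Hr (fun w Hw => proj2 (Hinv w Hw)))
    as [Hb1 [Hb2 Hb3]].
  pose proof (bazil_apply lam b g gp Hsg Hb0 Hb1 Hgp Hsubg) as Hg3.
  rewrite Hb3 in Hg3.
  assert (Hk : 0 <= 1 + 2 * lam) by lra.
  rewrite (kC lam Hk) in Hf3, Hg3.
  change (Cmod (a 3%nat) <= 2 / (2 * lam + 1) /\
          Cmod (a 3%nat - a 2%nat * a 2%nat)%C <= 2 / (2 * lam + 1)).
  assert (H1 : Cmod (a 3%nat) <= 2 / (2 * lam + 1)).
  { apply Rmult_le_reg_r with (2 * lam + 1). lra. unfold Rdiv. rewrite Rmult_assoc, Rinv_l by lra. lra. }
  assert (H2 : Cmod (2 * a 2%nat * a 2%nat - a 3%nat)%C <= 2 / (2 * lam + 1)).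
  { apply Rmult_le_reg_r with (2 * lam + 1). lra. unfold Rdiv. rewrite Rmult_assoc, Rinv_l by lra. lra. }
  split; auto.
  assert (E2 : @eq C (a 3%nat - a 2%nat * a 2%nat)%C
    ((a 3%nat - (2 * a 2%nat * a 2%nat - a 3%nat)) / 2)%C).
  { field. }
  rewrite E2.
  rewrite Cmod_div; [| intro E; apply RtoC_inj in E; lra].
  rewrite Cmod_R, Rabs_pos_eq by lra.
  pose proof (Cmod_sub_le (a 3%nat) (2 * a 2%nat * a 2%nat - a 3%nat)%C). lra.
Qed.
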